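(* Let $m\ge n\ge p\ge 1$, let $A$ be an $m\times n$ real matrix and $N=\operatorname{diag}(\mu_1,\dots,\mu_p)$ with $\mu_1>\dots>\mu_p>0$. On $M=\mathrm{St}(p,m)\times\mathrm{St}(p,n)$ with metric $\langle(\xi_1,\eta_1),(\xi_2,\eta_2)\rangle_{(U,V)}=\operatorname{tr}(\xi_1^T\xi_2)+\operatorname{tr}(\eta_1^T\eta_2)$ and retraction $R_{(U,V)}(\xi,\eta)=(\mathrm{qf}(U+\xi),\mathrm{qf}(V+\eta))$, let $F(U,V)=\operatorname{tr}(U^TAVN)$. Then there exists $L>0$ such that \[ \bigl|\mathrm{D}(F\circ R_{(U,V)})(t\zeta)[\zeta]-\mathrm{D}(F\circ R_{(U,V)})(0)[\zeta]\bigr|\le Lt \] for all $(U,V)\in M$, $\zeta=(\xi,\eta)\in T_{(U,V)}M$ with $\|\zeta\|_{(U,V)}=1$, and $t\ge 0$.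
   Context: $\mathrm{St}(p,n)=\{X\in\mathbb{R}^{n\times p}: X^TX=I_p\}$; for a full-rank $B$, $\mathrm{qf}(B)$ denotes the $Q$-factor of the unique decomposition $B=QR'$ with $Q$ having orthonormal columns and $R'$ upper triangular with positive diagonal. *)

(* Defs.v *)
(* real analysis (derivatives) on Stdlib R.
   Matrices are represented as functions nat -> nat -> R; only the entries
   in the stated index range are ever used. *)
From Stdlib Require Import Reals Lra ClassicalEpsilon.
Open Scope R_scope.

Definition Mat := nat -> nat -> R.

Fixpoint rsum (n : nat) (f : nat -> R) : R :=
  match n with O => 0 | S k => rsum k f + f k end.

Definition transpose (A : Mat) : Mat := fun i j => A j i.
Definition mmul (k : nat) (A B : Mat) : Mat :=
  fun i j => rsum k (fun l => A i l * B l j).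
Definition madd (A B : Mat) : Mat := fun i j => A i j + B i j.
Definition mscale (c : R) (A : Mat) : Mat := fun i j => c * A i j.
Definition mtrace (k : nat) (A : Mat) : R := rsum k (fun i => A i i).
Definition diagm (mu : nat -> R) : Mat :=
  fun i j => if Nat.eqb i j then mu i else 0.

(* X is an (m x p) matrix with X^T X = I_p, i.e. X in St(p,m) *)
Definition Stiefel (m p : nat) (X : Mat) : Prop :=
  forall i j, (i < p)%nat -> (j < p)%nat ->
    mmul m (transpose X) X i j = if Nat.eqb i j then 1 else 0.

Definition tangentSt (m p : nat) (U xi : Mat) : Prop :=
  forall i j, (i < p)%nat -> (j < p)%nat ->
    mmul m (transpose U) xi i j + mmul m (transpose xi) U i j = 0.

Definition is_qr (m p : nat) (B Q Rr : Mat) : Prop :=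
  Stiefel m p Q /\
  (forall i j, (j < i)%nat -> (i < p)%nat -> Rr i j = 0) /\
  (forall i, (i < p)%nat -> 0 < Rr i i) /\
  (forall i j, (i < m)%nat -> (j < p)%nat -> B i j = mmul p Q Rr i j).

(* qf(B): the Q-factor of the (unique, for full-rank B) QR decomposition *)
Definition qf (m p : nat) (B : Mat) : Mat :=
  epsilon (inhabits (fun _ _ => 0)) (fun Q => exists Rr, is_qr m p B Q Rr).

Definition Fcost (m n p : nat) (A : Mat) (mu : nat -> R) (U V : Mat) : R :=
  mtrace p (mmul p (mmul n (mmul m (transpose U) A) V) (diagm mu)).

Definition pullback (m n p : nat) (A : Mat) (mu : nat -> R) (U V xi eta : Mat)
  (tau : R) : R :=
  Fcost m n p A mu (qf m p (madd U (mscale tau xi)))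
                   (qf n p (madd V (mscale tau eta))).

Definition tnorm2 (m n p : nat) (xi eta : Mat) : R :=
  mtrace p (mmul m (transpose xi) xi) + mtrace p (mmul n (transpose eta) eta).

(* Main.v *)
Require Import Defs.
From Stdlib Require Import Reals Lra Lia ClassicalEpsilon.
From Coquelicot Require Import Coquelicot.
Open Scope R_scope.

Lemma rsum_ext n f g : (forall k, (k < n)%nat -> f k = g k) -> rsum n f = rsum n g.
Proof. induction n; simpl; intros H; auto. rewrite IHn, H; auto. Qed.

Lemma rsum_plus n f g : rsum n (fun k => f k + g k) = rsum n f + rsum n g.
Proof. induction n; simpl; [lra|]. rewrite IHn; lra. Qed.

Lemma rsum_minus n f g : rsum n (fun k => f k - g k) = rsum n f - rsum n g.
Proof. induction n; simpl; [lra|]. rewrite IHn; lra. Qed.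

Lemma rsum_scal_l n c f : rsum n (fun k => c * f k) = c * rsum n f.
Proof. induction n; simpl; [lra|]. rewrite IHn; lra. Qed.

Lemma rsum_scal_r n c f : rsum n (fun k => f k * c) = rsum n f * c.
Proof. induction n; simpl; [lra|]. rewrite IHn; lra. Qed.

Lemma rsum_zero n f : (forall k, (k < n)%nat -> f k = 0) -> rsum n f = 0.
Proof. induction n; simpl; intros H; auto. rewrite IHn, H; auto; lra. Qed.

Lemma rsum_swap n m (f : nat -> nat -> R) :
  rsum n (fun i => rsum m (fun j => f i j)) = rsum m (fun j => rsum n (fun i => f i j)).
Proof.
  induction n; simpl.
  - symmetry; apply rsum_zero; auto.
  - rewrite IHn, <- rsum_plus. reflexivity.
Qed.

Definition delta (i j : nat) : R := if Nat.eqb i j then 1 else 0.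

Lemma rsum_delta_r n f j : (j < n)%nat -> rsum n (fun k => f k * delta k j) = f j.
Proof.
  induction n; intros Hj; [lia|]. simpl. unfold delta at 2.
  destruct (Nat.eqb_spec n j).
  - subst. rewrite rsum_zero. lra. intros k Hk. unfold delta.
    destruct (Nat.eqb_spec k j); [lia|lra].
  - rewrite IHn by lia. lra.
Qed.

Lemma rsum_delta_l n f j : (j < n)%nat -> rsum n (fun k => delta j k * f k) = f j.
Proof.
  intros Hj. rewrite <- (rsum_delta_r n f j Hj). apply rsum_ext; intros k _.
  unfold delta. destruct (Nat.eqb_spec j k), (Nat.eqb_spec k j); subst; try lia; lra.
Qed.

Lemma delta_sym i j : delta i j = delta j i.
Proof. unfold delta. destruct (Nat.eqb_spec i j), (Nat.eqb_spec j i); subst; try lia; lra. Qed.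

Lemma rsum_le n f g : (forall k, (k < n)%nat -> f k <= g k) -> rsum n f <= rsum n g.
Proof. induction n; simpl; intros H; [lra|]. pose proof (H n ltac:(lia)). specialize (IHn (fun k Hk => H k ltac:(lia))). lra. Qed.

Lemma rsum_nonneg n f : (forall k, (k < n)%nat -> 0 <= f k) -> 0 <= rsum n f.
Proof. intros H. replace 0 with (rsum n (fun _ => 0)). apply rsum_le; auto. apply rsum_zero; auto. Qed.

Lemma rsum_abs n f : Rabs (rsum n f) <= rsum n (fun k => Rabs (f k)).
Proof. induction n; simpl. rewrite Rabs_R0; lra. eapply Rle_trans. apply Rabs_triang. lra. Qed.

Lemma rsum_const n c : rsum n (fun _ => c) = INR n * c.
Proof. induction n; simpl rsum. simpl; lra. rewrite IHn, S_INR. lra. Qed.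

Lemma rsum_bound n f c : (forall k, (k < n)%nat -> Rabs (f k) <= c) -> Rabs (rsum n f) <= INR n * c.
Proof.
  intros H. eapply Rle_trans. apply rsum_abs. rewrite <- rsum_const. apply rsum_le; auto.
Qed.

Lemma rsum_term_le n f j : (j < n)%nat -> (forall k, (k < n)%nat -> 0 <= f k) -> f j <= rsum n f.
Proof.
  induction n; intros Hj H; [lia|]. simpl.
  destruct (Nat.eq_dec j n).
  - subst. pose proof (rsum_nonneg n f (fun k Hk => H k ltac:(lia))). lra.
  - pose proof (IHn ltac:(lia) (fun k Hk => H k ltac:(lia))). pose proof (H n ltac:(lia)). lra.
Qed.

Lemma rsum_extend n N f : (n <= N)%nat -> (forall k, (n <= k < N)%nat -> f k = 0) -> rsum N f = rsum n f.
Proof.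
  induction N; intros HnN H.
  - assert (n = 0)%nat by lia. subst; reflexivity.
  - destruct (Nat.eq_dec n (S N)). subst; reflexivity.
    simpl. rewrite IHN by (intros; try apply H; lia). rewrite H by lia. lra.
Qed.

Lemma rsum_sq_le n f j : (j < n)%nat -> f j ^ 2 <= rsum n (fun k => f k ^ 2).
Proof. intros Hj. apply (rsum_term_le n (fun k => f k ^ 2)); auto. intros; nra. Qed.

Lemma abs_le_of_sq a : a ^ 2 <= 1 -> Rabs a <= 1.
Proof. intros H. apply Rabs_le. nra. Qed.

Lemma mmul_bound k (A B : Mat) i j a b :
  (forall l, (l < k)%nat -> Rabs (A i l) <= a) -> (forall l, (l < k)%nat -> Rabs (B l j) <= b) ->
  Rabs (rsum k (fun l => A i l * B l j)) <= INR k * (a * b).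
Proof.
  intros HA HB. apply rsum_bound. intros l Hl. rewrite Rabs_mult.
  apply Rmult_le_compat; try apply Rabs_pos; auto.
Qed.

Definition C1 (f : R -> R) := forall x, ex_derive f x.
Definition C2 (f : R -> R) := C1 f /\ C1 (Derive f).

Lemma C1_ext f g : (forall t, f t = g t) -> C1 f -> C1 g.
Proof. intros H Hf x. eapply ex_derive_ext; eauto. Qed.

Lemma C1_const c : C1 (fun _ => c).
Proof. intros x. apply ex_derive_const. Qed.

Lemma C1_affine a b : C1 (fun t => a + t * b).
Proof. intros x. auto_derive. auto. Qed.

Lemma C1_plus f g : C1 f -> C1 g -> C1 (fun t => f t + g t).
Proof. intros Hf Hg x. apply (ex_derive_plus f g); auto. Qed.

Lemma C1_mult f g : C1 f -> C1 g -> C1 (fun t => f t * g t).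
Proof. intros Hf Hg x. apply ex_derive_mult; auto. Qed.

Lemma C1_opp f : C1 f -> C1 (fun t => - f t).
Proof. intros Hf x. apply (ex_derive_opp f); auto. Qed.

Lemma C1_minus f g : C1 f -> C1 g -> C1 (fun t => f t - g t).
Proof. intros Hf Hg x. apply (ex_derive_minus f g); auto. Qed.

Lemma C1_inv f : C1 f -> (forall x, f x <> 0) -> C1 (fun t => / f t).
Proof. intros Hf Hn x. apply ex_derive_inv; auto. Qed.

Lemma C1_sqrt f : C1 f -> (forall x, 0 < f x) -> C1 (fun t => sqrt (f t)).
Proof. intros Hf Hp x. eexists. apply is_derive_sqrt; auto. apply Derive_correct; auto. Qed.

Lemma Derive_sqrt f x : ex_derive f x -> 0 < f x ->
  Derive (fun t => sqrt (f t)) x = Derive f x / (2 * sqrt (f x)).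
Proof. intros Hf Hp. apply is_derive_unique. apply is_derive_sqrt; auto. apply Derive_correct; auto. Qed.

Lemma C1_rsum n (f : nat -> R -> R) : (forall k, (k < n)%nat -> C1 (f k)) ->
  C1 (fun t => rsum n (fun k => f k t)).
Proof.
  induction n; intros H; simpl.
  - apply C1_const.
  - apply C1_plus; auto.
Qed.

Lemma Derive_rsum n (f : nat -> R -> R) x : (forall k, (k < n)%nat -> C1 (f k)) ->
  Derive (fun t => rsum n (fun k => f k t)) x = rsum n (fun k => Derive (f k) x).
Proof.
  induction n; intros H; simpl.
  - apply Derive_const.
  - rewrite (Derive_plus (fun t => rsum n (fun k => f k t)) (f n)).
    f_equal. apply IHn; auto. apply C1_rsum; auto. apply H; lia.
Qed.

Lemma Derive_mult_fun f g : C1 f -> C1 g -> forall t,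
  Derive (fun t => f t * g t) t = Derive f t * g t + f t * Derive g t.
Proof. intros; apply Derive_mult; auto. Qed.

Lemma C2_C1 f : C2 f -> C1 f. Proof. intros [H _]; auto. Qed.
Lemma C2_D f : C2 f -> C1 (Derive f). Proof. intros [_ H]; auto. Qed.

Lemma C2_ext f g : (forall t, f t = g t) -> C2 f -> C2 g.
Proof.
  intros H [H1 H2]. split. eapply C1_ext; eauto.
  eapply C1_ext; [|exact H2]. intros t. apply Derive_ext. auto.
Qed.

Lemma C2_const c : C2 (fun _ => c).
Proof. split. apply C1_const. eapply C1_ext; [|apply (C1_const 0)]. intros; rewrite Derive_const; auto. Qed.

Lemma C2_affine a b : C2 (fun t => a + t * b).
Proof.
  split. apply C1_affine. eapply C1_ext; [|apply (C1_const b)].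
  intros t. symmetry. apply is_derive_unique. auto_derive; auto. ring.
Qed.

Lemma C2_plus f g : C2 f -> C2 g -> C2 (fun t => f t + g t).
Proof.
  intros [F1 F2] [G1 G2]. split. apply C1_plus; auto.
  eapply C1_ext; [|apply (C1_plus _ _ F2 G2)]. intros t. simpl.
  symmetry. apply (Derive_plus f g); auto.
Qed.

Lemma C2_mult f g : C2 f -> C2 g -> C2 (fun t => f t * g t).
Proof.
  intros [F1 F2] [G1 G2]. split. apply C1_mult; auto.
  eapply C1_ext. intros t. symmetry. apply Derive_mult_fun; auto.
  apply C1_plus; apply C1_mult; auto.
Qed.

Lemma C2_opp f : C2 f -> C2 (fun t => - f t).
Proof.
  intros Hf. eapply C2_ext; [|apply (C2_mult (fun _ => -1) f (C2_const _) Hf)]. intros; simpl; ring.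
Qed.

Lemma C2_minus f g : C2 f -> C2 g -> C2 (fun t => f t - g t).
Proof. intros Hf Hg. eapply C2_ext; [|apply (C2_plus _ _ Hf (C2_opp _ Hg))]. intros; simpl; ring. Qed.

Lemma C2_rsum n (f : nat -> R -> R) : (forall k, (k < n)%nat -> C2 (f k)) ->
  C2 (fun t => rsum n (fun k => f k t)).
Proof.
  induction n; intros H; simpl.
  - apply C2_const.
  - apply C2_plus; auto.
Qed.

Lemma C2_inv_sqrt f : C2 f -> (forall x, 0 < f x) -> C2 (fun t => / sqrt (f t)).
Proof.
  intros [F1 F2] Hp.
  assert (Hs : C1 (fun t => sqrt (f t))) by (apply C1_sqrt; auto).
  assert (Hsp : forall x, 0 < sqrt (f x)) by (intros; apply sqrt_lt_R0; auto).
  assert (Hds : C1 (Derive (fun t => sqrt (f t)))).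
  { eapply C1_ext. intros t. symmetry. apply Derive_sqrt; auto.
    apply C1_mult; auto. apply C1_inv. apply C1_mult; auto. apply C1_const.
    intros x; specialize (Hsp x); lra. }
  split. apply C1_inv; auto. intros x; specialize (Hsp x); lra.
  eapply C1_ext. intros t. symmetry. apply Derive_inv; auto. specialize (Hsp t); lra.
  apply C1_mult. apply C1_opp; auto. apply C1_inv. apply C1_mult; auto. apply C1_mult; auto. apply C1_const.
  intros x. specialize (Hsp x). simpl. nra.
Qed.

Lemma Derive_rsum_prod n (f g : nat -> R -> R) x :
  (forall k, (k < n)%nat -> C1 (f k)) -> (forall k, (k < n)%nat -> C1 (g k)) ->
  Derive (fun t => rsum n (fun k => f k t * g k t)) x =
  rsum n (fun k => Derive (f k) x * g k x + f k x * Derive (g k) x).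
Proof.
  intros Hf Hg. rewrite (Derive_rsum n (fun k t => f k t * g k t)).
  apply rsum_ext; intros k Hk. apply Derive_mult; auto. apply Hf; auto. apply Hg; auto.
  intros k Hk. apply C1_mult; auto.
Qed.

Lemma Derive2_mult f g x : C2 f -> C2 g ->
  Derive (Derive (fun t => f t * g t)) x =
  Derive (Derive f) x * g x + 2 * (Derive f x * Derive g x) + f x * Derive (Derive g) x.
Proof.
  intros [F1 F2] [G1 G2].
  rewrite (Derive_ext _ (fun t => Derive f t * g t + f t * Derive g t)) by (intros; apply Derive_mult; auto).
  rewrite (Derive_plus (fun t => Derive f t * g t) (fun t => f t * Derive g t)).
  rewrite !Derive_mult; auto. ring.
  apply C1_mult; auto. apply C1_mult; auto.
Qed.

Lemma Derive2_rsum n (f : nat -> R -> R) x : (forall k, (k < n)%nat -> C2 (f k)) ->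
  Derive (Derive (fun t => rsum n (fun k => f k t))) x = rsum n (fun k => Derive (Derive (f k)) x).
Proof.
  intros H. rewrite (Derive_ext _ (fun t => rsum n (fun k => Derive (f k) t))).
  apply Derive_rsum. intros k Hk; apply H; auto.
  intros t. apply Derive_rsum. intros k Hk; apply H; auto.
Qed.

Lemma Derive2_rsum_prod n (f g : nat -> R -> R) x :
  (forall k, (k < n)%nat -> C2 (f k)) -> (forall k, (k < n)%nat -> C2 (g k)) ->
  Derive (Derive (fun t => rsum n (fun k => f k t * g k t))) x =
  rsum n (fun k => Derive (Derive (f k)) x * g k x + 2 * (Derive (f k) x * Derive (g k) x)
                    + f k x * Derive (Derive (g k)) x).
Proof.
  intros Hf Hg. rewrite (Derive2_rsum n (fun k t => f k t * g k t)).
  apply rsum_ext; intros k Hk. apply Derive2_mult; auto.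
  intros k Hk. apply C2_mult; auto.
Qed.

Definition BC2 (f : R -> R) a b c :=
  C2 f /\ forall x, Rabs (f x) <= a /\ Rabs (Derive f x) <= b /\ Rabs (Derive (Derive f) x) <= c.

Lemma BC2_ext f g a b c : (forall t, f t = g t) -> BC2 f a b c -> BC2 g a b c.
Proof.
  intros H [H1 H2]. assert (Hd : forall x, Derive f x = Derive g x) by (intros; apply Derive_ext; auto).
  split. eapply C2_ext; eauto. intros x. rewrite <- H, <- Hd.
  rewrite (Derive_ext (Derive g) (Derive f)) by (intros; auto). apply H2.
Qed.

Lemma BC2_mono f a b c a' b' c' : BC2 f a b c -> a <= a' -> b <= b' -> c <= c' -> BC2 f a' b' c'.
Proof. intros [H1 H2] ? ? ?. split; auto. intros x; destruct (H2 x) as (?&?&?); repeat split; lra. Qed.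

Lemma BC2_nonneg f a b c : BC2 f a b c -> 0 <= a /\ 0 <= b /\ 0 <= c.
Proof.
  intros [_ H]. destruct (H 0) as (?&?&?).
  pose proof (Rabs_pos (f 0)). pose proof (Rabs_pos (Derive f 0)). pose proof (Rabs_pos (Derive (Derive f) 0)). lra.
Qed.

Lemma BC2_plus f g a b c a' b' c' : BC2 f a b c -> BC2 g a' b' c' ->
  BC2 (fun t => f t + g t) (a + a') (b + b') (c + c').
Proof.
  intros [[F1 F2] Fb] [[G1 G2] Gb]. split. apply C2_plus; split; auto.
  intros x. destruct (Fb x) as (?&?&?), (Gb x) as (?&?&?).
  rewrite (Derive_ext (Derive (fun t => f t + g t)) (fun t => Derive f t + Derive g t))
    by (intros; apply (Derive_plus f g); auto).
  rewrite (Derive_plus f g), (Derive_plus (Derive f) (Derive g)); auto.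
  repeat split; (eapply Rle_trans; [apply Rabs_triang|]); lra.
Qed.

Lemma BC2_mult f g a b c a' b' c' : BC2 f a b c -> BC2 g a' b' c' ->
  BC2 (fun t => f t * g t) (a * a') (b * a' + a * b') (c * a' + 2 * (b * b') + a * c').
Proof.
  intros Hf Hg. destruct (BC2_nonneg _ _ _ _ Hf) as (?&?&?), (BC2_nonneg _ _ _ _ Hg) as (?&?&?).
  destruct Hf as [[F1 F2] Fb], Hg as [[G1 G2] Gb].
  split. apply C2_mult; split; auto.
  intros x. destruct (Fb x) as (?&?&?), (Gb x) as (?&?&?).
  rewrite Derive2_mult by (split; auto). rewrite Derive_mult by auto.
  repeat split.
  - rewrite Rabs_mult. apply Rmult_le_compat; auto using Rabs_pos.
  - eapply Rle_trans; [apply Rabs_triang|]. rewrite !Rabs_mult.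
    apply Rplus_le_compat; apply Rmult_le_compat; auto using Rabs_pos.
  - eapply Rle_trans; [apply Rabs_triang|]. eapply Rle_trans; [apply Rplus_le_compat_r; apply Rabs_triang|].
    rewrite !Rabs_mult, (Rabs_right 2) by lra.
    repeat apply Rplus_le_compat; try apply Rmult_le_compat_l; try lra; apply Rmult_le_compat; auto using Rabs_pos.
Qed.

Lemma BC2_const k : BC2 (fun _ => k) (Rabs k) 0 0.
Proof.
  split. apply C2_const. intros x. rewrite (Derive_ext (Derive (fun _ => k)) (fun _ => 0)) by (intros; apply Derive_const).
  rewrite !Derive_const, Rabs_R0. repeat split; lra.
Qed.

Lemma BC2_rsum n (f : nat -> R -> R) a b c : (forall k, (k < n)%nat -> BC2 (f k) (a k) (b k) (c k)) ->
  BC2 (fun t => rsum n (fun k => f k t)) (rsum n a) (rsum n b) (rsum n c).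
Proof.
  induction n; intros H; simpl.
  - eapply BC2_mono. apply BC2_const. rewrite Rabs_R0; lra. lra. lra.
  - apply BC2_plus; auto.
Qed.

Definition Pfull m p (B : Mat) := forall c : nat -> R,
  rsum p (fun a => c a ^ 2) <= rsum m (fun l => (rsum p (fun a => B l a * c a)) ^ 2).

Lemma rsum_mul_sum_l m p (x : nat -> R) (y : nat -> nat -> R) :
  rsum m (fun l => x l * rsum p (fun a => y l a)) = rsum p (fun a => rsum m (fun l => x l * y l a)).
Proof.
  rewrite <- rsum_swap. apply rsum_ext; intros l _. rewrite <- rsum_scal_l. reflexivity.
Qed.

Lemma rsum_mul_sum_r m p (x : nat -> R) (y : nat -> nat -> R) :
  rsum m (fun l => rsum p (fun a => y l a) * x l) = rsum p (fun a => rsum m (fun l => y l a * x l)).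
Proof.
  rewrite <- rsum_swap. apply rsum_ext; intros l _. rewrite <- rsum_scal_r. reflexivity.
Qed.

Lemma stiefel_delta m p Q : Stiefel m p Q ->
  forall i j, (i < p)%nat -> (j < p)%nat -> rsum m (fun l => Q l i * Q l j) = delta i j.
Proof. intros H i j Hi Hj. apply (H i j Hi Hj). Qed.

Lemma is_qr_R m p B Q Rr : is_qr m p B Q Rr ->
  forall k j, (k < p)%nat -> (j < p)%nat -> Rr k j = rsum m (fun l => Q l k * B l j).
Proof.
  intros (HS & Hup & Hd & HB) k j Hk Hj.
  rewrite (rsum_ext m _ (fun l => Q l k * rsum p (fun a => Q l a * Rr a j))).
  2:{ intros l Hl. rewrite HB by auto. reflexivity. }
  rewrite rsum_mul_sum_l.
  rewrite (rsum_ext p _ (fun a => delta k a * Rr a j)).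
  - rewrite rsum_delta_l; auto.
  - intros a Ha. rewrite <- (stiefel_delta m p Q HS k a Hk Ha), <- rsum_scal_r.
    apply rsum_ext; intros; ring.
Qed.

Definition wcol m (B Q : Mat) j i := B i j - rsum j (fun k => rsum m (fun l => Q l k * B l j) * Q i k).

Lemma qr_col m p B Q Rr : is_qr m p B Q Rr -> forall j, (j < p)%nat ->
  (forall i, (i < m)%nat -> wcol m B Q j i = Q i j * Rr j j) /\ 0 < Rr j j /\
  rsum m (fun l => wcol m B Q j l ^ 2) = Rr j j ^ 2.
Proof.
  intros Hqr j Hj. pose proof Hqr as (HS & Hup & Hd & HB).
  assert (Hw : forall i, (i < m)%nat -> wcol m B Q j i = Q i j * Rr j j).
  { intros i Hi. unfold wcol. rewrite HB by auto. unfold mmul.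
    rewrite (rsum_extend (S j) p) by (auto; intros k Hk; rewrite Hup by lia; ring).
    simpl. rewrite (rsum_ext j (fun k => rsum m (fun l => Q l k * B l j) * Q i k) (fun k => Q i k * Rr k j)).
    ring. intros k Hk. rewrite (is_qr_R m p B Q Rr Hqr k j) by lia. ring. }
  split; auto. split; auto.
  rewrite (rsum_ext m _ (fun l => Rr j j ^ 2 * (Q l j * Q l j))) by (intros l Hl; rewrite Hw by auto; ring).
  rewrite rsum_scal_l, (stiefel_delta m p Q HS j j) by auto. unfold delta. rewrite Nat.eqb_refl. ring.
Qed.

Lemma qr_col_formula m p B Q Rr : is_qr m p B Q Rr -> forall j, (j < p)%nat ->
  0 < rsum m (fun l => wcol m B Q j l ^ 2) /\
  forall i, (i < m)%nat -> Q i j = wcol m B Q j i * / sqrt (rsum m (fun l => wcol m B Q j l ^ 2)).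
Proof.
  intros Hqr j Hj. destruct (qr_col m p B Q Rr Hqr j Hj) as (Hw & Hpos & Hs).
  rewrite Hs. split. nra. intros i Hi. rewrite Hw by auto.
  rewrite sqrt_pow2 by lra. field. lra.
Qed.

Lemma qr_unique m p B Q1 R1 Q2 R2 : is_qr m p B Q1 R1 -> is_qr m p B Q2 R2 ->
  forall j, (j < p)%nat -> forall i, (i < m)%nat -> Q1 i j = Q2 i j.
Proof.
  intros H1 H2.
  assert (forall J j, (j < J)%nat -> (j < p)%nat -> forall i, (i < m)%nat -> Q1 i j = Q2 i j).
  2:{ intros j Hj. apply (H (S j)); auto. }
  induction J; intros j HjJ Hj i Hi; [lia|].
  destruct (qr_col_formula m p B Q1 R1 H1 j Hj) as (_ & F1).
  destruct (qr_col_formula m p B Q2 R2 H2 j Hj) as (_ & F2).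
  assert (Hw : forall i, (i < m)%nat -> wcol m B Q1 j i = wcol m B Q2 j i).
  { intros i' Hi'. unfold wcol. f_equal. apply rsum_ext; intros k Hk.
    rewrite (IHJ k) by lia. f_equal. apply rsum_ext; intros l Hl. rewrite (IHJ k) by lia. auto. }
  rewrite F1, F2 by auto. rewrite Hw by auto. do 3 f_equal. apply rsum_ext; intros l Hl. rewrite Hw; auto.
Qed.

Definition Inv m (B : Mat) J (Q Rr C : Mat) :=
  (forall i k, (i < J)%nat -> (k < J)%nat -> rsum m (fun l => Q l i * Q l k) = delta i k) /\
  (forall i k, (k < i)%nat -> Rr i k = 0) /\ (forall k, (k < J)%nat -> 0 < Rr k k) /\
  (forall i k, (i < m)%nat -> (k < J)%nat -> B i k = rsum J (fun a => Q i a * Rr a k)) /\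
  (forall i k, (i < m)%nat -> (k < J)%nat -> Q i k = rsum J (fun a => B i a * C a k)) /\
  (forall a k, (k < a)%nat -> C a k = 0).

Lemma Inv_step m p B J Q Rr C : Pfull m p B -> (J < p)%nat -> Inv m B J Q Rr C ->
  exists Q' Rr' C', Inv m B (S J) Q' Rr' C'.
Proof.
  intros HP HJ (I1 & I2 & I3 & I4 & I5 & I6).
  set (r := fun k => rsum m (fun l => Q l k * B l J)).
  set (c := fun a => delta a J - rsum J (fun k => r k * C a k)).
  set (w := fun i => B i J - rsum J (fun k => r k * Q i k)).
  set (s := rsum m (fun l => w l ^ 2)).
  set (nu := sqrt s).
  assert (Hwc : forall i, (i < m)%nat -> w i = rsum p (fun a => B i a * c a)).
  { intros i Hi. unfold c, w.
    rewrite (rsum_ext p _ (fun a => B i a * delta a J - rsum J (fun k => r k * (B i a * C a k))))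
      by (intros a Ha; rewrite Rmult_minus_distr_l; f_equal; rewrite <- rsum_scal_l; apply rsum_ext; intros; ring).
    rewrite rsum_minus, rsum_delta_r by auto. f_equal.
    rewrite rsum_swap. apply rsum_ext; intros k Hk. rewrite rsum_scal_l. f_equal.
    rewrite I5 by auto. symmetry. apply rsum_extend. lia. intros a Ha. rewrite I6 by lia. ring. }
  assert (HcJ : c J = 1).
  { unfold c, delta. rewrite Nat.eqb_refl. rewrite rsum_zero. ring. intros k Hk. rewrite I6 by lia. ring. }
  assert (Hs1 : 1 <= s).
  { pose proof (HP c) as Hc. pose proof (rsum_sq_le p c J HJ) as Hc2. rewrite HcJ in Hc2.
    unfold s. rewrite (rsum_ext m _ (fun l => (rsum p (fun a => B l a * c a)) ^ 2)) by (intros; rewrite Hwc; auto).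
    lra. }
  assert (Hnu : 0 < nu) by (apply sqrt_lt_R0; lra).
  assert (Hnu2 : nu * nu = s) by (apply sqrt_sqrt; lra).
  exists (fun i k => if Nat.eqb k J then w i / nu else Q i k).
  exists (fun a k => if Nat.eqb k J then (if Nat.ltb a J then r a else if Nat.eqb a J then nu else 0) else Rr a k).
  exists (fun a k => if Nat.eqb k J then c a / nu else C a k).
  assert (Hort : forall i, (i < J)%nat -> rsum m (fun l => Q l i * w l) = 0).
  { intros i Hi. unfold w.
    rewrite (rsum_ext m _ (fun l => Q l i * B l J - rsum J (fun k => r k * (Q l i * Q l k))))
      by (intros; rewrite Rmult_minus_distr_l, <- rsum_scal_l; f_equal; apply rsum_ext; intros; ring).
    rewrite rsum_minus. rewrite rsum_swap.
    rewrite (rsum_ext J _ (fun k => r k * delta i k)).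
    rewrite (rsum_ext J _ (fun k => r k * delta k i)) by (intros; rewrite delta_sym; auto).
    rewrite rsum_delta_r by auto. unfold r. ring.
    intros k Hk. rewrite rsum_scal_l, I1 by auto. auto. }
  split; [|split; [|split; [|split; [|split]]]].
  - intros i k Hi Hk.
    destruct (Nat.eqb_spec i J), (Nat.eqb_spec k J).
    + subst. unfold delta; rewrite Nat.eqb_refl.
      rewrite (rsum_ext m _ (fun l => / s * w l ^ 2)). rewrite rsum_scal_l. fold s. field. lra.
      intros. rewrite <- Hnu2. field. lra.
    + subst. rewrite (rsum_ext m _ (fun l => / nu * (Q l k * w l))) by (intros; field; lra).
      rewrite rsum_scal_l, Hort by lia. unfold delta. destruct (Nat.eqb_spec J k); [lia|ring].
    + subst. rewrite (rsum_ext m _ (fun l => / nu * (Q l i * w l))) by (intros; field; lra).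
      rewrite rsum_scal_l, Hort by lia. unfold delta. destruct (Nat.eqb_spec i J); [lia|ring].
    + apply I1; lia.
  - intros i k Hki. destruct (Nat.eqb_spec k J).
    + destruct (Nat.ltb_spec i J); [lia|]. destruct (Nat.eqb_spec i J); [lia|auto].
    + apply I2; auto.
  - intros k Hk. destruct (Nat.eqb_spec k J).
    + subst. destruct (Nat.ltb_spec J J); [lia|]. repeat rewrite Nat.eqb_refl; auto.
    + apply I3; lia.
  - intros i k Hi Hk. simpl rsum. destruct (Nat.eqb_spec k J).
    + subst. destruct (Nat.ltb_spec J J); [lia|]. repeat rewrite Nat.eqb_refl.
      rewrite (rsum_ext J _ (fun a => r a * Q i a)).
      unfold w. field. lra.
      intros a Ha. destruct (Nat.eqb_spec a J); [lia|]. destruct (Nat.ltb_spec a J); [|lia]. ring.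
    + rewrite I2 by lia. destruct (Nat.eqb_spec J J); [|lia].
      rewrite I4 by (auto; lia). rewrite Rmult_0_r, Rplus_0_r. apply rsum_ext.
      intros a Ha. destruct (Nat.eqb_spec a J); [lia|auto].
  - intros i k Hi Hk. destruct (Nat.eqb_spec k J).
    + subst. rewrite Hwc by auto.
      rewrite (rsum_ext (S J) _ (fun a => / nu * (B i a * c a))) by (intros; field; lra).
      rewrite rsum_scal_l. rewrite (rsum_extend (S J) p). field; lra. lia.
      intros a Ha. unfold c. unfold delta. destruct (Nat.eqb_spec a J); [lia|].
      rewrite rsum_zero. ring. intros k Hk'. rewrite I6 by lia. ring.
    + simpl rsum. rewrite (I6 J k) by lia. rewrite Rmult_0_r, Rplus_0_r. rewrite I5 by (auto; lia).
      apply rsum_ext; intros a Ha. auto.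
  - intros a k Hk. destruct (Nat.eqb_spec k J).
    + subst. unfold c, delta. destruct (Nat.eqb_spec a J); [lia|].
      rewrite rsum_zero. field; lra. intros k Hk'. rewrite I6 by lia. ring.
    + apply I6; auto.
Qed.

Lemma qr_exists m p B : Pfull m p B ->
  exists Q Rr C, is_qr m p B Q Rr /\
    (forall i j, (i < m)%nat -> (j < p)%nat -> Q i j = rsum p (fun a => B i a * C a j)) /\
    (forall a j, (j < a)%nat -> C a j = 0).
Proof.
  intros HP.
  assert (forall J, (J <= p)%nat -> exists Q Rr C, Inv m B J Q Rr C).
  { induction J; intros HJ.
    - exists (fun _ _ => 0), (fun _ _ => 0), (fun _ _ => 0).
      repeat split; intros; try lia; auto.
    - destruct (IHJ ltac:(lia)) as (Q & Rr & C & HI). eapply Inv_step; eauto. }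
  destruct (H p (le_n p)) as (Q & Rr & C & I1 & I2 & I3 & I4 & I5 & I6).
  exists Q, Rr, C. repeat split; auto; intros; apply I1 || apply I2; auto.
Qed.

Lemma qf_spec m p B : Pfull m p B -> exists Rr, is_qr m p B (qf m p B) Rr.
Proof.
  intros HP. unfold qf. apply epsilon_spec.
  destruct (qr_exists m p B HP) as (Q & Rr & C & H & _). exists Q, Rr; auto.
Qed.

Lemma qf_C m p B : Pfull m p B -> exists C,
    (forall i j, (i < m)%nat -> (j < p)%nat -> qf m p B i j = rsum p (fun a => B i a * C a j)) /\
    (forall a j, (j < a)%nat -> C a j = 0) /\
    (forall a j, (a < p)%nat -> (j < p)%nat -> Rabs (C a j) <= 1).
Proof.
  intros HP. destruct (qr_exists m p B HP) as (Q & Rr & C & H & HQ & HC).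
  destruct (qf_spec m p B HP) as (Rr' & H').
  assert (HQQ : forall i j, (i < m)%nat -> (j < p)%nat -> qf m p B i j = rsum p (fun a => B i a * C a j)).
  { intros i j Hi Hj. rewrite <- HQ by auto. eapply qr_unique; eauto. }
  exists C. split; auto. split; auto.
  intros a j Ha Hj. apply abs_le_of_sq.
  eapply Rle_trans. apply (rsum_sq_le p (fun a => C a j) a Ha).
  eapply Rle_trans. apply (HP (fun a => C a j)).
  destruct H' as (HS & _).
  rewrite (rsum_ext m _ (fun l => qf m p B l j * qf m p B l j)).
  rewrite (stiefel_delta m p _ HS j j Hj Hj). unfold delta; rewrite Nat.eqb_refl; lra.
  intros l Hl. rewrite HQQ by auto. ring.
Qed.

Lemma sum_prod_bound k (f g : nat -> R) a b :
  (forall l, (l < k)%nat -> Rabs (f l) <= a) -> (forall l, (l < k)%nat -> Rabs (g l) <= b) ->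
  Rabs (rsum k (fun l => f l * g l)) <= INR k * (a * b).
Proof.
  intros HA HB. apply rsum_bound. intros l Hl. rewrite Rabs_mult.
  apply Rmult_le_compat; try apply Rabs_pos; auto.
Qed.

Lemma tri_bound p (X Y Z S : Mat) :
  (forall i j, (j < i)%nat -> (i < p)%nat -> X i j = 0) ->
  (forall i j, (i < p)%nat -> (j < p)%nat -> Z i j = X i j + Y i j) ->
  (forall i j, (i < p)%nat -> (j < p)%nat -> Y i j + Y j i = S i j) ->
  forall i j, (i < p)%nat -> (j < p)%nat -> Rabs (X i j) <= Rabs (Z i j) + Rabs (Z j i) + Rabs (S i j).
Proof.
  intros HX HZ HY i j Hi Hj.
  pose proof (Rabs_pos (Z i j)); pose proof (Rabs_pos (Z j i)); pose proof (Rabs_pos (S i j)).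
  destruct (Nat.lt_total i j) as [Hij|[Hij|Hij]].
  - pose proof (HZ j i Hj Hi) as E1. rewrite HX in E1 by auto.
    pose proof (HZ i j Hi Hj). pose proof (HY i j Hi Hj).
    replace (X i j) with (Z i j + Z j i - S i j) by lra.
    eapply Rle_trans. apply Rabs_triang. rewrite Rabs_Ropp.
    pose proof (Rabs_triang (Z i j) (Z j i)). lra.
  - subst j. pose proof (HZ i i Hi Hj). pose proof (HY i i Hi Hj).
    replace (X i i) with (Z i i + - (/2 * S i i)) by lra.
    eapply Rle_trans. apply Rabs_triang. rewrite Rabs_Ropp, Rabs_mult, (Rabs_right (/2)) by lra. lra.
  - rewrite HX by auto. rewrite Rabs_R0. lra.
Qed.

Definition bE p := INR p * (1 * 1).
Definition bK m p := INR m * (1 * bE p) + INR m * (1 * bE p) + 0.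
Definition c1 m p := bE p + INR p * (1 * bK m p).
Definition bOK m p := INR p * (INR m * (1 * c1 m p) * bK m p).
Definition bK2 m p := 2 * bOK m p + 2 * bOK m p + 2 * (INR m * (c1 m p * c1 m p)).
Definition c2 m p := 2 * (INR p * (c1 m p * bK m p)) + INR p * (1 * bK2 m p).

Lemma pointwise m p (Q Q1 Q2 R R1 R2 C X : Mat) :
 (forall i j, (i < p)%nat -> (j < p)%nat -> rsum m (fun l => Q l i * Q l j) = delta i j) ->
 (forall i j, (i < p)%nat -> (j < p)%nat -> rsum m (fun l => Q1 l i * Q l j + Q l i * Q1 l j) = 0) ->
 (forall i j, (i < p)%nat -> (j < p)%nat ->
    rsum m (fun l => Q2 l i * Q l j + 2 * (Q1 l i * Q1 l j) + Q l i * Q2 l j) = 0) ->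
 (forall i j, (i < m)%nat -> (j < p)%nat -> X i j = rsum p (fun k => Q1 i k * R k j + Q i k * R1 k j)) ->
 (forall i j, (i < m)%nat -> (j < p)%nat ->
    rsum p (fun k => Q2 i k * R k j + 2 * (Q1 i k * R1 k j) + Q i k * R2 k j) = 0) ->
 (forall k j, (j < k)%nat -> (k < p)%nat -> R1 k j = 0) ->
 (forall k j, (j < k)%nat -> (k < p)%nat -> R2 k j = 0) ->
 (forall k j, (j < k)%nat -> C k j = 0) ->
 (forall i j, (i < p)%nat -> (j < p)%nat -> rsum p (fun k => R i k * C k j) = delta i j) ->
 (forall i j, (i < p)%nat -> (j < p)%nat -> Rabs (C i j) <= 1) ->
 (forall i j, (i < m)%nat -> (j < p)%nat -> Rabs (X i j) <= 1) ->
 forall i j, (i < m)%nat -> (j < p)%nat -> Rabs (Q1 i j) <= c1 m p /\ Rabs (Q2 i j) <= c2 m p.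
Proof.
  intros hQ hQ1 hQ2 hd he hR1 hR2 hC hRC hCb hXb.
  set (E := fun i j => rsum p (fun k => X i k * C k j)).
  set (K := fun i j => rsum p (fun k => R1 i k * C k j)).
  set (K2 := fun i j => rsum p (fun k => R2 i k * C k j)).
  assert (hQb : forall l i, (l < m)%nat -> (i < p)%nat -> Rabs (Q l i) <= 1).
  { intros l i Hl Hi. apply abs_le_of_sq. pose proof (rsum_sq_le m (fun l => Q l i) l Hl) as H.
    simpl in H. rewrite (rsum_ext m _ (fun l => Q l i * Q l i)) in H by (intros; ring).
    rewrite hQ in H by auto. unfold delta in H. rewrite Nat.eqb_refl in H. exact H. }
  assert (S1 : forall i j, (i < m)%nat -> (j < p)%nat -> Q1 i j = E i j - rsum p (fun k => Q i k * K k j)).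
  { intros i j Hi Hj. unfold E.
    rewrite (rsum_ext p _ (fun k => rsum p (fun a => Q1 i a * R a k + Q i a * R1 a k) * C k j))
      by (intros; rewrite hd; auto).
    rewrite rsum_mul_sum_r.
    rewrite (rsum_ext p _ (fun a => Q1 i a * delta a j + Q i a * K a j)).
    rewrite rsum_plus, rsum_delta_r by auto. ring.
    intros a Ha. rewrite <- hRC by auto. unfold K. rewrite <- !rsum_scal_l, <- rsum_plus.
    apply rsum_ext; intros; ring. }
  set (Z := fun i j => rsum m (fun l => Q l i * E l j)).
  set (Om := fun i j => rsum m (fun l => Q l i * Q1 l j)).
  assert (S2 : forall i j, (i < p)%nat -> (j < p)%nat -> Z i j = K i j + Om i j).
  { intros i j Hi Hj. unfold Z.
    rewrite (rsum_ext m _ (fun l => Q l i * Q1 l j + rsum p (fun k => Q l i * Q l k * K k j))).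
    rewrite rsum_plus. rewrite rsum_swap.
    rewrite (rsum_ext p _ (fun k => delta i k * K k j)). rewrite rsum_delta_l by auto. unfold Om. ring.
    intros k Hk. rewrite rsum_scal_r, hQ; auto.
    intros l Hl. rewrite (S1 l j) by auto. rewrite (rsum_ext p (fun k => Q l i * Q l k * K k j) (fun k => Q l i * (Q l k * K k j))) by (intros; ring). rewrite rsum_scal_l. ring. }
  assert (S3 : forall i j, (i < p)%nat -> (j < p)%nat -> Om i j + Om j i = 0).
  { intros i j Hi Hj. unfold Om. rewrite <- rsum_plus. rewrite <- (hQ1 j i) by auto. apply rsum_ext; intros; ring. }
  assert (S4 : forall i j, (j < i)%nat -> (i < p)%nat -> K i j = 0).
  { intros i j Hji Hi. unfold K. apply rsum_zero. intros k Hk.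
    destruct (Nat.lt_ge_cases k i). rewrite hR1 by lia. ring. rewrite hC by lia. ring. }
  assert (hEb : forall i j, (i < m)%nat -> (j < p)%nat -> Rabs (E i j) <= bE p).
  { intros i j Hi Hj. apply sum_prod_bound; intros; auto. }
  assert (hZb : forall i j, (i < p)%nat -> (j < p)%nat -> Rabs (Z i j) <= INR m * (1 * bE p)).
  { intros i j Hi Hj. apply sum_prod_bound; intros; auto. }
  assert (hKb : forall i j, (i < p)%nat -> (j < p)%nat -> Rabs (K i j) <= bK m p).
  { intros i j Hi Hj. eapply Rle_trans.
    apply (tri_bound p K Om Z (fun _ _ => 0)); auto.
    rewrite Rabs_R0. unfold bK. pose proof (hZb i j Hi Hj). pose proof (hZb j i Hj Hi). lra. }
  assert (hQ1b : forall i j, (i < m)%nat -> (j < p)%nat -> Rabs (Q1 i j) <= c1 m p).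
  { intros i j Hi Hj. rewrite S1 by auto. unfold Rminus. eapply Rle_trans. apply Rabs_triang.
    rewrite Rabs_Ropp. unfold c1. apply Rplus_le_compat. auto. apply sum_prod_bound; intros; auto. }
  assert (S6 : forall i j, (i < m)%nat -> (j < p)%nat ->
     Q2 i j = - (2 * rsum p (fun a => Q1 i a * K a j)) - rsum p (fun a => Q i a * K2 a j)).
  { intros i j Hi Hj.
    assert (H0 : rsum p (fun k => rsum p (fun a => Q2 i a * R a k + 2 * (Q1 i a * R1 a k) + Q i a * R2 a k) * C k j) = 0).
    { apply rsum_zero; intros k Hk. rewrite he by auto. ring. }
    rewrite rsum_mul_sum_r in H0.
    rewrite (rsum_ext p _ (fun a => Q2 i a * delta a j + (2 * (Q1 i a * K a j) + Q i a * K2 a j))) in H0.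
    rewrite rsum_plus, rsum_delta_r, rsum_plus, rsum_scal_l in H0 by auto. lra.
    intros a Ha. rewrite <- hRC by auto. unfold K, K2. rewrite <- !rsum_scal_l, <- !rsum_plus.
    apply rsum_ext; intros; ring. }
  set (Psi := fun i j => rsum m (fun l => Q l i * Q2 l j)).
  set (OK := fun i j => rsum p (fun a => Om i a * K a j)).
  set (Z2 := fun i j => - (2 * OK i j)).
  set (S2' := fun i j => - (2 * rsum m (fun l => Q1 l i * Q1 l j))).
  assert (S7 : forall i j, (i < p)%nat -> (j < p)%nat -> Z2 i j = K2 i j + Psi i j).
  { intros i j Hi Hj. unfold Psi.
    rewrite (rsum_ext m _ (fun l => - 2 * rsum p (fun a => Q l i * Q1 l a * K a j) - rsum p (fun a => Q l i * Q l a * K2 a j))).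
    2:{ intros l Hl. rewrite S6 by auto.
        rewrite (rsum_ext p (fun a => Q l i * Q1 l a * K a j) (fun a => Q l i * (Q1 l a * K a j))) by (intros; ring).
        rewrite (rsum_ext p (fun a => Q l i * Q l a * K2 a j) (fun a => Q l i * (Q l a * K2 a j))) by (intros; ring).
        rewrite !rsum_scal_l. ring. }
    rewrite rsum_minus, rsum_scal_l.
    rewrite (rsum_swap m p (fun l a => Q l i * Q1 l a * K a j)).
    rewrite (rsum_swap m p (fun l a => Q l i * Q l a * K2 a j)).
    rewrite (rsum_ext p (fun a => rsum m (fun l => Q l i * Q l a * K2 a j)) (fun a => delta i a * K2 a j)).
    2:{ intros a Ha. rewrite rsum_scal_r, hQ; auto. }
    rewrite rsum_delta_l by auto.
    rewrite (rsum_ext p (fun a => rsum m (fun l => Q l i * Q1 l a * K a j)) (fun a => Om i a * K a j)).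
    2:{ intros a Ha. rewrite rsum_scal_r. reflexivity. }
    unfold Z2, OK. ring. }
  assert (S8 : forall i j, (i < p)%nat -> (j < p)%nat -> Psi i j + Psi j i = S2' i j).
  { intros i j Hi Hj. unfold Psi, S2'. pose proof (hQ2 j i Hj Hi) as H.
    rewrite !rsum_plus, rsum_scal_l in H.
    rewrite (rsum_ext m (fun l => Q l i * Q2 l j) (fun l => Q2 l j * Q l i)) by (intros; ring).
    rewrite (rsum_ext m (fun l => Q1 l i * Q1 l j) (fun l => Q1 l j * Q1 l i)) by (intros; ring). 
    lra. }
  assert (S9 : forall i j, (j < i)%nat -> (i < p)%nat -> K2 i j = 0).
  { intros i j Hji Hi. unfold K2. apply rsum_zero. intros k Hk.
    destruct (Nat.lt_ge_cases k i). rewrite hR2 by lia. ring. rewrite hC by lia. ring. }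
  assert (hOmb : forall i j, (i < p)%nat -> (j < p)%nat -> Rabs (Om i j) <= INR m * (1 * c1 m p)).
  { intros i j Hi Hj. apply sum_prod_bound; intros; auto. }
  assert (hZ2b : forall i j, (i < p)%nat -> (j < p)%nat -> Rabs (Z2 i j) <= 2 * bOK m p).
  { intros i j Hi Hj. unfold Z2. rewrite Rabs_Ropp, Rabs_mult, (Rabs_right 2) by lra.
    apply Rmult_le_compat_l. lra. apply sum_prod_bound; intros; auto. }
  assert (hS2b : forall i j, (i < p)%nat -> (j < p)%nat -> Rabs (S2' i j) <= 2 * (INR m * (c1 m p * c1 m p))).
  { intros i j Hi Hj. unfold S2'. rewrite Rabs_Ropp, Rabs_mult, (Rabs_right 2) by lra.
    apply Rmult_le_compat_l. lra. apply sum_prod_bound; intros; auto. }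
  assert (hK2b : forall i j, (i < p)%nat -> (j < p)%nat -> Rabs (K2 i j) <= bK2 m p).
  { intros i j Hi Hj. eapply Rle_trans.
    apply (tri_bound p K2 Psi Z2 S2'); auto.
    unfold bK2. pose proof (hZ2b i j Hi Hj). pose proof (hZ2b j i Hj Hi). pose proof (hS2b i j Hi Hj). lra. }
  intros i j Hi Hj. split; auto.
  rewrite S6 by auto. unfold Rminus. eapply Rle_trans. apply Rabs_triang.
  rewrite !Rabs_Ropp. unfold c2. apply Rplus_le_compat.
  rewrite Rabs_mult, Rabs_right by lra. apply Rmult_le_compat_l. lra. apply sum_prod_bound; intros; auto.
  apply sum_prod_bound; intros; auto.
Qed.

Lemma quad_form m p (Y Z : Mat) (c : nat -> R) :
  rsum m (fun l => rsum p (fun a => Y l a * c a) * rsum p (fun b => Z l b * c b)) =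
  rsum p (fun a => rsum p (fun b => c a * c b * rsum m (fun l => Y l a * Z l b))).
Proof.
  rewrite rsum_mul_sum_r. apply rsum_ext; intros a Ha.
  rewrite (rsum_ext m _ (fun l => rsum p (fun b => Y l a * c a * (Z l b * c b)))) by (intros; rewrite rsum_scal_l; auto).
  rewrite rsum_swap. apply rsum_ext; intros b Hb. rewrite <- rsum_scal_l. apply rsum_ext; intros; ring.
Qed.

Lemma skew_form p (M : Mat) (c : nat -> R) :
  (forall a b, (a < p)%nat -> (b < p)%nat -> M a b + M b a = 0) ->
  rsum p (fun a => rsum p (fun b => c a * c b * M a b)) = 0.
Proof.
  intros H. set (T := rsum p (fun a => rsum p (fun b => c a * c b * M a b))).
  assert (T + T = 0).
  { unfold T at 2. rewrite rsum_swap. unfold T. rewrite <- rsum_plus.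
    apply rsum_zero; intros a Ha. rewrite <- rsum_plus. apply rsum_zero; intros b Hb.
    pose proof (H a b Ha Hb). replace (M b a) with (- M a b) by lra. ring. }
  lra.
Qed.

Lemma Pfull_B m p U X t : Stiefel m p U -> tangentSt m p U X -> Pfull m p (madd U (mscale t X)).
Proof.
  intros HS HT c. unfold madd, mscale.
  set (u := fun l => rsum p (fun a => U l a * c a)).
  set (x := fun l => rsum p (fun a => X l a * c a)).
  rewrite (rsum_ext m _ (fun l => u l * u l + 2 * t * (u l * x l) + t ^ 2 * (x l * x l))).
  2:{ intros l Hl. rewrite (rsum_ext p _ (fun a => U l a * c a + t * (X l a * c a))) by (intros; ring).
      rewrite rsum_plus, rsum_scal_l. fold (u l) (x l). ring. }
  rewrite !rsum_plus, !rsum_scal_l.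
  assert (Hu : rsum m (fun l => u l * u l) = rsum p (fun a => c a ^ 2)).
  { unfold u. rewrite quad_form. apply rsum_ext; intros a Ha.
    rewrite (rsum_ext p _ (fun b => (c a * c b) * delta b a)) by (intros; rewrite (stiefel_delta m p U HS), delta_sym; auto).
    rewrite rsum_delta_r by auto. ring. }
  assert (Hux : rsum m (fun l => u l * x l) = 0).
  { unfold u, x. rewrite quad_form. apply skew_form. intros a b Ha Hb. rewrite <- (HT a b Ha Hb). unfold mmul, transpose. f_equal. apply rsum_ext; intros; ring. }
  assert (0 <= rsum m (fun l => x l * x l)) by (apply rsum_nonneg; intros; nra).
  rewrite Hu, Hux. nra.
Qed.

Lemma Derive2_ext f g x : (forall t, f t = g t) -> Derive (Derive f) x = Derive (Derive g) x.
Proof. intros H. apply Derive_ext. intros t. apply Derive_ext. auto. Qed.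

Lemma C2_pow2 f : C2 f -> C2 (fun t => f t ^ 2).
Proof. intros H. eapply C2_ext; [|apply (C2_mult _ _ H H)]. intros; simpl; ring. Qed.

Section Path.
Variables (m p : nat) (U X : Mat).
Hypothesis HS : Stiefel m p U.
Hypothesis HT : tangentSt m p U X.

Definition Bt t := madd U (mscale t X).
Definition Qt t := qf m p (Bt t).
Definition rt t k j := rsum m (fun l => Qt t l k * Bt t l j).

Lemma Bt_C2 i j : C2 (fun t => Bt t i j).
Proof. unfold Bt, madd, mscale. eapply C2_ext; [|apply (C2_affine (U i j) (X i j))]. intros; simpl; ring. Qed.

Lemma Qt_qr t : exists Rr, is_qr m p (Bt t) (Qt t) Rr.
Proof. apply qf_spec. apply Pfull_B; auto. Qed.

Lemma Qt_C2 : forall j, (j < p)%nat -> forall i, (i < m)%nat -> C2 (fun t => Qt t i j).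
Proof.
  assert (forall J j, (j < J)%nat -> (j < p)%nat -> forall i, (i < m)%nat -> C2 (fun t => Qt t i j)).
  2:{ intros j Hj. apply (H (S j)); auto. }
  induction J; intros j HjJ Hj i Hi; [lia|].
  assert (Hw : forall l, (l < m)%nat -> C2 (fun t => wcol m (Bt t) (Qt t) j l)).
  { intros l Hl. unfold wcol. apply C2_minus. apply Bt_C2.
    apply (C2_rsum j (fun k t => rsum m (fun l' => Qt t l' k * Bt t l' j) * Qt t l k)). intros k Hk.
    apply C2_mult. apply (C2_rsum m (fun l' t => Qt t l' k * Bt t l' j)). intros l' Hl'.
    apply C2_mult. apply IHJ; lia. apply Bt_C2. apply IHJ; lia. }
  assert (Hs : C2 (fun t => rsum m (fun l => wcol m (Bt t) (Qt t) j l ^ 2))).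
  { apply (C2_rsum m (fun l t => wcol m (Bt t) (Qt t) j l ^ 2)). intros l Hl. apply C2_pow2; auto. }
  assert (Hf : forall t, Qt t i j = wcol m (Bt t) (Qt t) j i * / sqrt (rsum m (fun l => wcol m (Bt t) (Qt t) j l ^ 2))
     /\ 0 < rsum m (fun l => wcol m (Bt t) (Qt t) j l ^ 2)).
  { intros t. destruct (Qt_qr t) as (Rr & H). destruct (qr_col_formula m p _ _ _ H j Hj) as (H1 & H2). auto. }
  eapply C2_ext. intros t. symmetry. apply (proj1 (Hf t)).
  apply C2_mult. auto. apply C2_inv_sqrt; auto. intros t; apply (proj2 (Hf t)).
Qed.

Lemma rt_C2 k j : (k < p)%nat -> C2 (fun t => rt t k j).
Proof.
  intros Hk. unfold rt. apply (C2_rsum m (fun l t => Qt t l k * Bt t l j)). intros l Hl.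
  apply C2_mult. apply Qt_C2; auto. apply Bt_C2.
Qed.

Lemma I1 t i j : (i < m)%nat -> (j < p)%nat -> Bt t i j = rsum p (fun k => Qt t i k * rt t k j).
Proof.
  intros Hi Hj. destruct (Qt_qr t) as (Rr & H). pose proof H as (_ & _ & _ & HB).
  rewrite HB by auto. unfold mmul. apply rsum_ext; intros k Hk. unfold rt.
  rewrite (is_qr_R m p _ _ _ H k j) by auto. reflexivity.
Qed.

Lemma I2 t i j : (i < p)%nat -> (j < p)%nat -> rsum m (fun l => Qt t l i * Qt t l j) = delta i j.
Proof. intros Hi Hj. destruct (Qt_qr t) as (Rr & H). destruct H as (HS' & _). apply (stiefel_delta m p); auto. Qed.

Lemma I3 t k j : (j < k)%nat -> (k < p)%nat -> rt t k j = 0.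
Proof.
  intros Hjk Hk. destruct (Qt_qr t) as (Rr & H). unfold rt. rewrite <- (is_qr_R m p _ _ _ H k j) by lia.
  destruct H as (_ & Hup & _). apply Hup; auto.
Qed.

Lemma RC (t : R) : exists C : Mat, (forall a j, (j < a)%nat -> C a j = 0) /\
  (forall a j, (a < p)%nat -> (j < p)%nat -> Rabs (C a j) <= 1) /\
  (forall i j, (i < p)%nat -> (j < p)%nat -> rsum p (fun k => rt t i k * C k j) = delta i j).
Proof.
  destruct (qf_C m p (Bt t)) as (C & HQ & HC & Hb). apply Pfull_B; auto.
  exists C. split; auto. split; auto. intros i j Hi Hj.
  unfold rt. rewrite (rsum_mul_sum_r p m (fun k => C k j) (fun k l => Qt t l i * Bt t l k)).
  rewrite <- (I2 t i j) by auto. apply rsum_ext; intros l Hl.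
  rewrite (rsum_ext p _ (fun k => Qt t l i * (Bt t l k * C k j))) by (intros; ring).
  rewrite rsum_scal_l. f_equal. symmetry. apply HQ; auto.
Qed.

Lemma Derive2_const c x : Derive (Derive (fun _ => c)) x = 0.
Proof. rewrite (Derive_ext (Derive (fun _ => c)) (fun _ => 0)) by (intros; apply Derive_const). apply Derive_const. Qed.

Hypothesis HXb : forall i j, (i < m)%nat -> (j < p)%nat -> Rabs (X i j) <= 1.

Lemma Q_BC2 i j : (i < m)%nat -> (j < p)%nat -> BC2 (fun t => Qt t i j) 1 (c1 m p) (c2 m p).
Proof.
  intros Hi Hj. split. apply Qt_C2; auto. intros x.
  destruct (RC x) as (C & HC & HCb & HRC).
  assert (HQC1 : forall k, (k < p)%nat -> forall l, (l < m)%nat -> C1 (fun t => Qt t l k)).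
  { intros k Hk l Hl. apply C2_C1, Qt_C2; auto. }
  assert (HQC2 : forall k, (k < p)%nat -> forall l, (l < m)%nat -> C2 (fun t => Qt t l k)).
  { intros k Hk l Hl. apply Qt_C2; auto. }
  assert (P := pointwise m p (Qt x) (fun i j => Derive (fun t => Qt t i j) x)
     (fun i j => Derive (Derive (fun t => Qt t i j)) x) (fun k j => rt x k j)
     (fun k j => Derive (fun t => rt t k j) x) (fun k j => Derive (Derive (fun t => rt t k j)) x) C X).
  destruct (P) with (i := i) (j := j) as [P1 P2]; auto.
  - intros; apply I2; auto.
  - intros a b Ha Hb. pose proof (Derive_rsum_prod m (fun l t => Qt t l a) (fun l t => Qt t l b) x) as E.
    rewrite (Derive_ext _ (fun _ => delta a b)) in E by (intros; apply I2; auto).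
    rewrite Derive_const in E. symmetry. apply E; intros; apply HQC1; auto.
  - intros a b Ha Hb. pose proof (Derive2_rsum_prod m (fun l t => Qt t l a) (fun l t => Qt t l b) x) as E.
    rewrite (Derive2_ext _ (fun _ => delta a b)) in E by (intros; apply I2; auto).
    rewrite Derive2_const in E. symmetry. apply E; intros; apply HQC2; auto.
  - intros a b Ha Hb. pose proof (Derive_rsum_prod p (fun k t => Qt t a k) (fun k t => rt t k b) x) as E.
    rewrite (Derive_ext _ (fun t => Bt t a b)) in E by (intros; symmetry; apply I1; auto).
    rewrite <- E. 2: intros; apply HQC1; auto. 2: intros; apply C2_C1, rt_C2; auto.
    symmetry. apply is_derive_unique. unfold Bt, madd, mscale. auto_derive; auto. ring.
  - intros a b Ha Hb. pose proof (Derive2_rsum_prod p (fun k t => Qt t a k) (fun k t => rt t k b) x) as E.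
    rewrite (Derive2_ext _ (fun t => U a b + t * X a b)) in E by (intros; rewrite <- I1; auto).
    rewrite <- E. 2: intros; apply HQC2; auto. 2: intros; apply rt_C2; auto.
    rewrite (Derive_ext (Derive (fun t => U a b + t * X a b)) (fun _ => X a b)).
    apply Derive_const. intros t. apply is_derive_unique. auto_derive; auto. ring.
  - intros k b Hbk Hk. simpl. rewrite (Derive_ext _ (fun _ => 0)) by (intros; apply I3; auto). apply Derive_const.
  - intros k b Hbk Hk. simpl. rewrite (Derive2_ext _ (fun _ => 0)) by (intros; apply I3; auto). apply Derive2_const.
  - repeat split; auto. apply abs_le_of_sq. pose proof (rsum_sq_le m (fun l => Qt x l j) i Hi) as H.
    simpl in H. rewrite (rsum_ext m _ (fun l => Qt x l j * Qt x l j)) in H by (intros; ring).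
    rewrite I2 in H by auto. unfold delta in H. rewrite Nat.eqb_refl in H. exact H.
Qed.
End Path.

Lemma Fcost_expand m n p A mu (QU QV : Mat) :
  Fcost m n p A mu QU QV =
  rsum p (fun j => rsum n (fun k => rsum m (fun l => (mu j * A l k) * (QU l j * QV k j)))).
Proof.
  unfold Fcost, mtrace, mmul, diagm, transpose. apply rsum_ext; intros i Hi.
  rewrite (rsum_ext p _ (fun j' => (rsum n (fun k => rsum m (fun l => QU l i * A l k) * QV k j') * mu j') * delta j' i)).
  2:{ intros j' _. unfold delta. destruct (Nat.eqb_spec j' i); ring. }
  rewrite rsum_delta_r by auto. rewrite <- rsum_scal_r. apply rsum_ext; intros k Hk.
  rewrite <- rsum_scal_r, <- rsum_scal_r. apply rsum_ext; intros; ring.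
Qed.

Definition K0 m n p := c2 m p + 2 * (c1 m p * c1 n p) + c2 n p.
Definition Fc m n p (A : Mat) (mu : nat -> R) :=
  rsum p (fun j => rsum n (fun k => rsum m (fun l => Rabs (mu j * A l k) * K0 m n p))).

Lemma c_nonneg m p : 0 <= c1 m p /\ 0 <= c2 m p.
Proof.
  pose proof (pos_INR m); pose proof (pos_INR p).
  assert (0 <= bE p) by (unfold bE; nra).
  assert (0 <= bK m p) by (unfold bK; nra).
  assert (0 <= c1 m p) by (unfold c1; nra).
  assert (0 <= bOK m p) by (unfold bOK; repeat apply Rmult_le_pos; nra).
  assert (0 <= bK2 m p) by (unfold bK2; nra).
  split; auto. unfold c2. apply Rplus_le_le_0_compat; repeat apply Rmult_le_pos; lra.
Qed.

Lemma Fc_nonneg m n p A mu : 0 <= Fc m n p A mu.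
Proof.
  destruct (c_nonneg m p), (c_nonneg n p).
  unfold Fc. repeat (apply rsum_nonneg; intros). apply Rmult_le_pos. apply Rabs_pos. unfold K0. nra.
Qed.

Lemma entry_bound m n p (xi eta : Mat) : tnorm2 m n p xi eta = 1 ->
  forall i j, (i < m)%nat -> (j < p)%nat -> Rabs (xi i j) <= 1.
Proof.
  intros H i j Hi Hj. apply abs_le_of_sq. unfold tnorm2, mtrace, mmul, transpose in H.
  assert (0 <= rsum p (fun i => rsum n (fun l => eta l i * eta l i))).
  { repeat (apply rsum_nonneg; intros). nra. }
  assert (xi i j ^ 2 <= rsum m (fun l => xi l j * xi l j)).
  { pose proof (rsum_sq_le m (fun l => xi l j) i Hi). simpl in *.
    rewrite (rsum_ext m (fun l => xi l j * xi l j) (fun l => xi l j * (xi l j * 1))) by (intros; ring). auto. }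
  assert (rsum m (fun l => xi l j * xi l j) <= rsum p (fun i => rsum m (fun l => xi l i * xi l i))).
  { apply (rsum_term_le p (fun i => rsum m (fun l => xi l i * xi l i))); auto.
    intros; apply rsum_nonneg; intros; nra. }
  lra.
Qed.

Theorem mainTheorem7 (m n p : nat) (A : Mat) (mu : nat -> R)
  (Hnm : (n <= m)%nat) (Hpn : (p <= n)%nat) (Hp : (1 <= p)%nat)
  (Hdec : forall i, (S i < p)%nat -> mu (S i) < mu i)
  (Hpos : forall i, (i < p)%nat -> 0 < mu i) :
  exists L, 0 < L /\
    forall (U V xi eta : Mat) (t : R),
      Stiefel m p U -> Stiefel n p V ->
      tangentSt m p U xi -> tangentSt n p V eta ->
      tnorm2 m n p xi eta = 1 -> 0 <= t ->
      exists d1 d0,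
        derivable_pt_lim (pullback m n p A mu U V xi eta) t d1 /\
        derivable_pt_lim (pullback m n p A mu U V xi eta) 0 d0 /\
        Rabs (d1 - d0) <= L * t.
Proof.
  exists (Fc m n p A mu + 1). split. pose proof (Fc_nonneg m n p A mu); lra.
  intros U V xi eta t HU HV HTU HTV Hn Ht.
  assert (Hxi : forall i j, (i < m)%nat -> (j < p)%nat -> Rabs (xi i j) <= 1) by (eapply entry_bound; eauto).
  assert (Heta : forall i j, (i < n)%nat -> (j < p)%nat -> Rabs (eta i j) <= 1).
  { intros i j Hi Hj. apply (entry_bound n m p eta xi); auto. unfold tnorm2 in *. lra. }
  set (F := pullback m n p A mu U V xi eta).
  assert (HB : exists a b, BC2 F a b (Fc m n p A mu)).
  { do 2 eexists. eapply BC2_mono.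
    2,3: apply Rle_refl.
    - eapply BC2_ext. intros t'. unfold F, pullback. symmetry. apply Fcost_expand.
      apply BC2_rsum; intros j Hj. apply BC2_rsum; intros k Hk. apply BC2_rsum; intros l Hl.
      apply BC2_mult. apply BC2_const. apply BC2_mult.
      apply (Q_BC2 m p U xi HU HTU Hxi); auto.
      apply (Q_BC2 n p V eta HV HTV Heta); auto.
    - unfold Fc. repeat (apply rsum_le; intros). unfold K0. apply Req_le. ring. }
  destruct HB as (a & b & [[F1 F2] Fb]).
  exists (Derive F t), (Derive F 0). split; [|split].
  - apply is_derive_Reals. apply Derive_correct. apply F1.
  - apply is_derive_Reals. apply Derive_correct. apply F1.
  - destruct (MVT_gen (Derive F) 0 t (Derive (Derive F))) as (c & Hc & Eq).
    + intros x _. apply Derive_correct. apply F2.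
    + intros x _. apply continuity_pt_filterlim. apply (ex_derive_continuous (Derive F) x). apply F2.
    + rewrite Eq. rewrite Rabs_mult. rewrite Rminus_0_r, (Rabs_right t) by lra.
      destruct (Fb c) as (_ & _ & Hc2). apply Rmult_le_compat_r; lra.
Qed.
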